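(* Let $P,Q,R\in W^{(l)}\setminus\{0\}$ with $[P,Q]_{\rho,\sigma}=\ell_{\rho,\sigma}(R)$, where $(\rho,\sigma)\in\mathfrak V$ and $\sigma\le0$. (1) If $\mathrm{st}_{\rho,\sigma}(P)$ and $\mathrm{st}_{\rho,\sigma}(Q)$ are not aligned, then $\mathrm{st}_{\rho,\sigma}(P)+\mathrm{st}_{\rho,\sigma}(Q)-(1,1)=\mathrm{st}_{\rho,\sigma}(R)$. (2) If $\mathrm{en}_{\rho,\sigma}(P)$ and $\mathrm{en}_{\rho,\sigma}(Q)$ are not aligned, then $\mathrm{en}_{\rho,\sigma}(P)+\mathrm{en}_{\rho,\sigma}(Q)-(1,1)=\mathrm{en}_{\rho,\sigma}(R)$.
   Context: $K$ is a field of characteristic zero, $l\in\mathbb{N}$. $W^{(l)}$ is the associative $K$-algebra with $K$-basis $\{X^{i/l}Y^j:i\in\mathbb{Z},j\in\mathbb{N}_0\}$, powers of $X$ multiplying as Laurent monomials and $[Y,X^\alpha]=\alpha X^{\alpha-1}$ for $\alpha\in\frac1l\mathbb{Z}$. $\Psi^{(l)}(X^{i/l}Y^j)=x^{i/l}y^j\in K[x^{\pm1/l},y]$ ($K$-linear); supports are sets of exponents with nonzero coefficient. $\mathfrak V=\{(\rho,\sigma)\in\mathbb{Z}^2:\gcd(\rho,\sigma)=1,\rho+\sigma>0\}$. For $P\ne0$, $v_{\rho,\sigma}(P)=\max\{\rho a+\sigma b:(a,b)\in\mathrm{Supp}(P)\}$, $\ell_{\rho,\sigma}(P)$ = sum of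 terms of $\Psi^{(l)}(P)$ attaining it. $\mathrm{st}_{\rho,\sigma}(P)$: among points $(a,b)\in\mathrm{Supp}(\ell_{\rho,\sigma}(P))$ maximizing $a-b$, the one with largest $a$; $\mathrm{en}_{\rho,\sigma}(P)$: among those maximizing $b-a$, the one with largest $b$. $[P,Q]_{\rho,\sigma}:=0$ if $[P,Q]=0$ or $v_{\rho,\sigma}([P,Q])<v_{\rho,\sigma}(P)+v_{\rho,\sigma}(Q)-(\rho+\sigma)$, and $:=\ell_{\rho,\sigma}([P,Q])$ otherwise. Vectors $(a_1,a_2),(b_1,b_2)$ are aligned if $a_1b_2-a_2b_1=0$. *)

(* Defs.v *)
From mathcomp Require Import all_boot all_order all_algebra.
Set Implicit Arguments. Unset Strict Implicit. Unset Printing Implicit Defensive.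
Import Order.TTheory GRing.Theory Num.Theory.
Local Open Scope ring_scope.

(* An element of W^(l) is represented by a formal finite sum, i.e. a list of
   monomials (i, j, c) standing for c * X^(i/l) Y^j.  All notions below
   (Psi, support, v, ell, st, en, [_,_]_{rho,sigma}) depend only on the
   coefficient function Psi, so they are well defined on W^(l). *)
Section Weyl.
Variable K : fieldType.
Variable l : nat.

Definition mono := (int * nat * K)%type.
Definition Wl := seq mono.

Definition expo (m : mono) : rat * rat := ((m.1.1)%:~R / l%:R, (m.1.2)%:R).

Definition psi (P : Wl) (a b : rat) : K :=
  \sum_(m <- P | expo m == (a, b)) m.2.

Definition supp (P : Wl) : seq (rat * rat) :=
  undup [seq expo m | m <- P & psi P (expo m).1 (expo m).2 != 0].

Definition ff (i : int) (k : nat) : K := \prod_(t < k) (i%:~R / l%:R - t%:R).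

(* (c1 X^(i1/l) Y^j1)(c2 X^(i2/l) Y^j2)
     = sum_k C(j1,k) (i2/l)_k c1 c2 X^((i1+i2-kl)/l) Y^(j1-k+j2),
   which is the product forced by [Y, X^a] = a X^(a-1). *)
Definition mulm (m1 m2 : mono) : Wl :=
  [seq ((m1.1.1 + m2.1.1 - (k * l)%N%:Z)%R, (m1.1.2 - k + m2.1.2)%N,
        m1.2 * m2.2 * ('C(m1.1.2, k))%:R * ff m2.1.1 k) | k <- iota 0 (m1.1.2).+1].

Definition mulW (P Q : Wl) : Wl := flatten [seq mulm m1 m2 | m1 <- P, m2 <- Q].
Definition oppW (P : Wl) : Wl := [seq (m.1, - m.2) | m <- P].
Definition commW (P Q : Wl) : Wl := mulW P Q ++ oppW (mulW Q P).

Variables rho sigma : int.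

Definition wt (p : rat * rat) : rat := rho%:~R * p.1 + sigma%:~R * p.2.

(* v_{rho,sigma}(P) (meaningful for P <> 0) *)
Definition vval (P : Wl) : rat :=
  match supp P with
  | [::] => 0
  | p :: s => foldr (fun q acc => Num.max (wt q) acc) (wt p) s
  end.

(* ell_{rho,sigma}(P), as a coefficient function of K[x^{+-1/l}, y] *)
Definition ell (P : Wl) (a b : rat) : K :=
  if wt (a, b) == vval P then psi P a b else 0.

Definition supp_ell (P : Wl) : seq (rat * rat) :=
  [seq p <- supp P | wt p == vval P].

Definition better_st (p q : rat * rat) : bool :=
  (q.1 - q.2 < p.1 - p.2) || ((q.1 - q.2 == p.1 - p.2) && (q.1 < p.1)).
Definition better_en (p q : rat * rat) : bool :=
  (q.2 - q.1 < p.2 - p.1) || ((q.2 - q.1 == p.2 - p.1) && (q.2 < p.2)).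

Definition pick_best (better : rat * rat -> rat * rat -> bool) (s : seq (rat * rat)) :=
  foldr (fun p acc => if better p acc then p else acc) (head (0, 0) s) s.

Definition st (P : Wl) : rat * rat := pick_best better_st (supp_ell P).
Definition en (P : Wl) : rat * rat := pick_best better_en (supp_ell P).

Definition brk (P Q : Wl) (a b : rat) : K :=
  let C := commW P Q in
  if (supp C == [::]) || (vval C < vval P + vval Q - (rho + sigma)%:~R) then 0
  else ell C a b.

End Weyl.

Definition aligned (p q : rat * rat) : bool := p.1 * q.2 - p.2 * q.1 == 0.

Definition inV (rho sigma : int) : bool := coprimez rho sigma && (0 < rho + sigma).

(* Main.v *)
Require Import Defs.
From mathcomp Require Import all_boot all_order all_algebra.
From mathcomp Require Import ring lra.
Import Order.TTheory GRing.Theory Num.Theory.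
Local Open Scope ring_scope.

Section Work.
Variable K : fieldType.
Hypothesis hK : [pchar K] =i pred0.
Variable l : nat.
Hypothesis hl : (0 < l)%N.

Definition key := (int * nat)%type.
Definition ex (e : key) : rat * rat := (e.1%:~R / l%:R, e.2%:R).
Definition coef (P : Wl K) (e : key) : K := \sum_(m <- P | m.1 == e) m.2.
Definition keys (P : Wl K) := undup (map fst P).
Definition ak (i : int) : K := i%:~R / l%:R.
Definition pm1 (x y : rat * rat) := (x.1 + y.1 - 1, x.2 + y.2 - 1).
Definition padd (x y : rat * rat) := (x.1 + y.1, x.2 + y.2).
Definition keyk (e1 e2 : key) (k : nat) : key :=
  ((e1.1 + e2.1 - (k * l)%N%:Z)%R, (e1.2 - k + e2.2)%N).
Definition T (e1 e2 : key) (p : rat * rat) : K :=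
  \sum_(k <- iota 0 (e1.2).+1 | ex (keyk e1 e2 k) == p) ('C(e1.2, k))%:R * ff K l e2.1 k.

Lemma lQ : (l%:R : rat) != 0. Proof. by rewrite pnatr_eq0 -lt0n. Qed.
Lemma lK : (l%:R : K) != 0. Proof. by move/pcharf0P: hK => ->; rewrite -lt0n. Qed.

Lemma ex_inj : injective ex.
Proof.
case=> [i j] [i' j'] [] /= h1 /eqP h2.
have := lQ => hl'.
move: h1 => /(congr1 (fun x => x * l%:R)); rewrite !divfK // => /eqP.
rewrite eqr_int => /eqP ->; move: h2; rewrite eqr_nat => /eqP -> //.
Qed.

Lemma psi_ex P e : psi l P (ex e).1 (ex e).2 = coef P e.
Proof.
rewrite /psi /coef; apply: eq_bigl => m.
by rewrite /expo -/(ex m.1) -surjective_pairing (inj_eq ex_inj).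
Qed.

Lemma regroup P (F : key -> K) :
  \sum_(m <- P) m.2 * F m.1 = \sum_(e <- keys P) coef P e * F e.
Proof.
transitivity (\sum_(e <- keys P) \sum_(m <- P) (if m.1 == e then m.2 * F m.1 else 0)).
  rewrite exchange_big /= [LHS]big_seq [RHS]big_seq; apply: eq_bigr => m hm.
  rewrite (bigD1_seq m.1) ?undup_uniq ?mem_undup ?map_f //=.
  have -> : (m.1 == m.1) = true by apply/eqP.
  rewrite big1_seq ?addr0 //.
  by move=> e /andP [he _]; rewrite eq_sym (negbTE he).
apply: eq_bigr => e _; rewrite /coef big_distrl /= big_mkcond /=.
rewrite [RHS]big_mkcond; by apply: eq_bigr => m _; case: eqP => // ->.
Qed.

Lemma psi_cat (A B : Wl K) a b : psi l (A ++ B) a b = psi l A a b + psi l B a b.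
Proof. by rewrite /psi big_cat. Qed.

Lemma psi_opp (A : Wl K) a b : psi l (oppW A) a b = - psi l A a b.
Proof. by rewrite /psi /oppW big_map sumrN. Qed.

Lemma psi_mulm (m1 m2 : mono K) p :
  psi l (mulm l m1 m2) p.1 p.2 = m1.2 * m2.2 * T m1.1 m2.1 p.
Proof.
rewrite /psi /mulm big_map /T big_distrr /=; rewrite -surjective_pairing.
by apply: eq_bigr => k _; rewrite !mulrA.
Qed.

Definition S2 (P Q : Wl K) p := \sum_(e1 <- keys P) \sum_(e2 <- keys Q)
  coef P e1 * coef Q e2 * T e1 e2 p.

Lemma psi_mulW (P Q : Wl K) p : psi l (mulW l P Q) p.1 p.2 = S2 P Q p.
Proof.
rewrite /mulW /psi big_flatten /= big_allpairs_dep /=.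
under eq_bigr do under eq_bigr do rewrite -/(psi l _ p.1 p.2) psi_mulm.
transitivity (\sum_(m1 <- P) m1.2 * \sum_(e2 <- keys Q) coef Q e2 * T m1.1 e2 p).
  apply: eq_bigr => m1 _; rewrite -(regroup Q (fun e2 => T m1.1 e2 p)) big_distrr.
  by apply: eq_bigr => m2 _ /=; ring.
rewrite (regroup P (fun e1 => \sum_(e2 <- keys Q) coef Q e2 * T e1 e2 p)) /S2.
apply: eq_bigr => e1 _; rewrite big_distrr /=; apply: eq_bigr => e2 _; ring.
Qed.

Variables rho sigma : int.
Hypothesis hc : 0 < rho + sigma.
Notation wt := (wt rho sigma).
Definition c : rat := (rho + sigma)%:~R.
Lemma c_gt0 : 0 < c. Proof. by rewrite /c ltr0z. Qed.

Lemma ex_keyk e1 e2 k : (k <= e1.2)%N ->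
  ex (keyk e1 e2 k) = ((ex e1).1 + (ex e2).1 - k%:R, (ex e1).2 + (ex e2).2 - k%:R).
Proof.
move=> hk; rewrite /ex /keyk /=; congr pair.
  by field; exact: lQ.
by rewrite natrD natrB //; ring.
Qed.

Lemma ex_keyk' e1 e2 k : (k <= e1.2)%N ->
  ex (keyk e1 e2 k) = ((padd (ex e1) (ex e2)).1 - k%:R, (padd (ex e1) (ex e2)).2 - k%:R).
Proof. exact: ex_keyk. Qed.

Lemma wt_shift x t : wt (x.1 - t, x.2 - t) = wt x - t * c.
Proof. by rewrite /wt /c /= intrD; ring. Qed.

Lemma wt_padd x y : wt (padd x y) = wt x + wt y.
Proof. by rewrite /wt /=; ring. Qed.

Lemma wt_pm1 x y : wt (pm1 x y) = wt x + wt y - c.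
Proof. by rewrite /wt /c /= intrD; ring. Qed.

Lemma ifR (b : bool) (x : K) : (if b then x else 0) = b%:R * x.
Proof. by case: b; rewrite ?mul1r ?mul0r. Qed.

Lemma T_split e1 e2 p : wt (padd (ex e1) (ex e2)) - c <= wt p ->
  T e1 e2 p = (padd (ex e1) (ex e2) == p)%:R
            + (pm1 (ex e1) (ex e2) == p)%:R * (e1.2%:R * ak e2.1).
Proof.
move=> hp; rewrite /T big_mkcond /=.
case: e1 hp => i1 j1 hp /=; rewrite big_cons ex_keyk //= !subr0 bin0 /ff big_ord0 mulr1 ifR mulr1.
congr (_ + _).
case: j1 hp => [|n] hp /=; first by rewrite big_nil mul0r mulr0.
rewrite big_cons ex_keyk //= -/(pm1 _ _) bin1 big_ord1 subr0 ifR.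
rewrite big1_seq ?addr0 //.
move=> k /andP [_]; rewrite mem_iota => /andP [h2 h3].
case: eqP => // hkp; exfalso.
move: hkp; rewrite ex_keyk' => [hkp|]; last by rewrite /=; move: h3; rewrite add2n ltnS.
move: hp; rewrite -hkp wt_shift => hp.
have hk2 : (2:rat) <= k%:R by rewrite (ler_nat rat 2 k).
have := c_gt0; nra.
Qed.

Lemma padd_sym x y : padd x y = padd y x.
Proof. by rewrite /padd (addrC x.1) (addrC x.2). Qed.
Lemma pm1_sym x y : pm1 x y = pm1 y x.
Proof. by rewrite /pm1 (addrC x.1) (addrC x.2). Qed.

Lemma D_eq e1 e2 p : wt (padd (ex e1) (ex e2)) - c <= wt p ->
  T e1 e2 p - T e2 e1 p =
  (pm1 (ex e1) (ex e2) == p)%:R * (e1.2%:R * ak e2.1 - e2.2%:R * ak e1.1).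
Proof.
move=> hp; rewrite (@T_split e1 e2 p hp) T_split; last by rewrite padd_sym.
rewrite (padd_sym (ex e2)) (pm1_sym (ex e2)); ring.
Qed.

Lemma psi_comm (P Q : Wl K) p : psi l (commW l P Q) p.1 p.2 =
  \sum_(e1 <- keys P) \sum_(e2 <- keys Q) coef P e1 * coef Q e2 * (T e1 e2 p - T e2 e1 p).
Proof.
rewrite /commW psi_cat psi_opp !psi_mulW /S2 [X in _ - X]exchange_big -sumrB.
apply: eq_bigr => e1 _; rewrite -sumrB; apply: eq_bigr => e2 _; ring.
Qed.

Lemma supp_mem (P : Wl K) p : (p \in supp l P) = (psi l P p.1 p.2 != 0).
Proof.
rewrite /supp mem_undup; apply/mapP/idP.
  by case=> m; rewrite mem_filter => /andP [h _] ->.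
move=> h.
have [m hm hmp] : exists2 m, m \in P & expo l m == p.
  apply/hasP; apply: contraNT h => /hasPn H.
  rewrite /psi big1_seq // => m /andP [hmp hm].
  by move: hmp; rewrite -surjective_pairing => /eqP E; move: (H m hm); rewrite E eqxx.
exists m; last by rewrite (eqP hmp). by rewrite (@mem_filter _ _ m) hm (eqP hmp) h.
Qed.

Lemma supp_ell_mem (P : Wl K) p : (p \in supp_ell l rho sigma P) =
  (psi l P p.1 p.2 != 0) && (wt p == vval l rho sigma P).
Proof. by rewrite /supp_ell mem_filter supp_mem andbC. Qed.

Lemma foldmax (x : rat * rat) s :
  (forall q, q \in x :: s -> wt q <= foldr (fun q acc => Num.max (wt q) acc) (wt x) s) /\
  exists2 q, q \in x :: s & wt q = foldr (fun q acc => Num.max (wt q) acc) (wt x) s.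
Proof.
elim: s => [|y s [IH1 [q hq IH2]]] /=.
  by split; [move=> q; rewrite inE => /eqP -> | exists x; rewrite ?inE].
split.
  move=> z; rewrite !inE le_max => /or3P [/eqP->|/eqP ->|hq'].
  - by rewrite orbC IH1 ?inE ?eqxx.
  - by rewrite lexx.
  - by rewrite orbC IH1 ?inE ?hq' ?orbT.
rewrite maxEle; case: ifP => _.
  by exists q => //; move: hq; rewrite !inE => /orP [->|->]; rewrite ?orbT.
by exists y; rewrite ?inE ?eqxx ?orbT.
Qed.

Lemma vval_spec (P : Wl K) : supp l P != [::] ->
  (forall q, q \in supp l P -> wt q <= vval l rho sigma P) /\
  exists2 q, q \in supp l P & wt q = vval l rho sigma P.
Proof. by rewrite /vval; case: (supp l P) => // x s _; exact: foldmax. Qed.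

Lemma vval_eq (P : Wl K) v u : u \in supp l P -> wt u = v ->
  (forall q, q \in supp l P -> wt q <= v) -> vval l rho sigma P = v.
Proof.
move=> hu hwu hle.
have hne : supp l P != [::] by case: (supp l P) hu.
have [h1 [q hq hq']] := @vval_spec P hne.
apply/eqP; rewrite eq_le -hq' hle //= -hwu; rewrite hq'; exact: h1.
Qed.

Section Better.
Variables f g : rat * rat -> rat.
Hypothesis hfg : forall x y, f x = f y -> g x = g y -> x = y.
Definition better_gen (p q : rat * rat) : bool :=
  (f q < f p) || ((f q == f p) && (g q < g p)).

Lemma bg_trans x y z : better_gen x y -> better_gen y z -> better_gen x z.
Proof.
rewrite /better_gen => /orP [h|/andP [/eqP e h]] /orP [h'|/andP [/eqP e' h']].
- by rewrite (lt_trans h' h).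
- by rewrite e' h.
- by rewrite -e h'.
- by rewrite e' e eqxx (lt_trans h' h) orbT.
Qed.

Lemma bg_total x y : x != y -> better_gen x y || better_gen y x.
Proof.
move=> hxy; rewrite /better_gen.
case: (ltgtP (f x) (f y)) => hf; rewrite ?orbT //.
rewrite ?hf ?eqxx /=;  case: (ltgtP (g x) (g y)) => hg; rewrite ?orbT //.
by move: hxy; rewrite (hfg _ _ hf hg) eqxx.
Qed.

Lemma bg_f x y : better_gen x y -> f y <= f x.
Proof. by rewrite /better_gen => /orP [/ltW //|/andP [/eqP -> _]]. Qed.

Lemma fold_best x s :
  let r := foldr (fun p acc => if better_gen p acc then p else acc) x s in
  r \in x :: s /\ forall q, q \in x :: s -> r = q \/ better_gen r q.
Proof.
elim: s => [|y s [IH1 IH2]] /=.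
  by split; [rewrite inE | move=> q; rewrite inE => /eqP ->; left].
set r' := foldr _ x s in IH1 IH2 *.
case: ifP => hb.
  split; first by rewrite !inE eqxx orbT.
  move=> q; rewrite !inE => /or3P [/eqP->|/eqP->|hq].
  - case: (IH2 x); first by rewrite inE eqxx.
      by move=> <-; right.
    by move=> h; right; exact: bg_trans hb h.
  - by left.
  - case: (IH2 q); first by rewrite inE hq orbT.
      by move=> <-; right.
    by move=> h; right; exact: bg_trans hb h.
split; first by move: IH1; rewrite !inE => /orP [->|->]; rewrite ?orbT.
move=> q; rewrite !inE => /or3P [/eqP->|/eqP->|hq].
- by apply: IH2; rewrite inE eqxx.
- case: (eqVneq r' y) => [->|hne]; first by left.
  by move: (bg_total _ _ hne); rewrite hb orbF => h; right.
- by apply: IH2; rewrite inE hq orbT.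
Qed.

Lemma pick_gen s : s != [::] ->
  pick_best better_gen s \in s /\
  forall q, q \in s -> pick_best better_gen s = q \/ better_gen (pick_best better_gen s) q.
Proof.
case: s => // x s _.
have [h1 h2] := fold_best x (x :: s).
change (pick_best better_gen (x::s)) with
  (foldr (fun p acc => if better_gen p acc then p else acc) x (x :: s)).
split.
  by move: h1; rewrite inE => /orP [/eqP ->|//]; rewrite inE eqxx.
by move=> q hq; apply: h2; rewrite inE hq orbT.
Qed.
End Better.

Lemma intf_neq0 (z : int) : z != 0 -> (z%:~R : K) != 0.
Proof.
have H := (pcharf0P K).1 hK.
case: z => n hn.
  by rewrite -[(Posz n)%:~R]/(n%:R) H; move: hn; apply: contra => /eqP ->.
by rewrite NegzE mulrNz oppr_eq0 -[((n.+1)%:Z)%:~R]/((n.+1)%:R : K) H.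
Qed.

Definition det (e1 e2 : key) : K := e1.2%:R * ak e2.1 - e2.2%:R * ak e1.1.

Lemma det_ne0 e1 e2 : ~~ aligned (ex e1) (ex e2) -> det e1 e2 != 0.
Proof.
move=> hal.
set z : int := (e1.2%:Z * e2.1 - e2.2%:Z * e1.1).
have hz : z != 0.
  apply: contra hal => /eqP hz0; rewrite /aligned /ex /=.
  have -> : e1.1%:~R / l%:R * e2.2%:R - e1.2%:R * (e2.1%:~R / l%:R) = - (z%:~R : rat) / l%:R.
    rewrite /z intrB !intrM; field; exact: lQ.
  by rewrite hz0 oppr0 mul0r.
have -> : det e1 e2 = z%:~R / l%:R.
  rewrite /det /ak /z intrB !intrM; field; exact: lK.
by rewrite mulf_neq0 ?invr_eq0 ?intf_neq0 ?lK.
Qed.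

Lemma sum_ne0 (I : eqType) (r : seq I) (F : I -> K) :
  \sum_(i <- r) F i != 0 -> exists2 i, i \in r & F i != 0.
Proof.
move=> h; apply/hasP; apply: contraNT h => /hasPn H.
by rewrite big1_seq // => i /andP [_ hi]; apply/eqP; move: (H i hi); rewrite negbK.
Qed.

Section Main.
Variables f g : rat * rat -> rat.
Hypothesis hfg : forall x y, f x = f y -> g x = g y -> x = y.
Hypothesis hfw : forall x y, f x = f y -> wt x = wt y -> x = y.
Hypothesis hfp : forall x y, f (pm1 x y) = f x + f y.
Notation bt := (better_gen f g).
Notation vv := (vval l rho sigma).
Notation sell := (supp_ell l rho sigma).

Lemma sell_ne0 (P : Wl K) : supp l P != [::] -> sell P != [::].
Proof.
move=> hP; have [_ [q hq hwq]] := vval_spec _ hP.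
have : q \in sell P by rewrite supp_ell_mem -supp_mem hq hwq eqxx.
by case: (sell P).
Qed.

Lemma best_spec (P : Wl K) : supp l P != [::] ->
  pick_best bt (sell P) \in sell P /\
  forall E, E \in sell P -> E = pick_best bt (sell P) \/ f E < f (pick_best bt (sell P)).
Proof.
move=> hP; have [h1 h2] := @pick_gen f g hfg _ (sell_ne0 _ hP).
split => // E hE; case: (h2 E hE) => [->|]; first by left.
rewrite /better_gen => /orP [h|/andP [/eqP e _]]; first by right.
left; apply: hfw => //.
move: hE h1; rewrite !supp_ell_mem => /andP [_ /eqP ->] /andP [_ /eqP ->] //.
Qed.

Lemma key_of (P : Wl K) s : s \in sell P ->
  exists ks, [/\ ks \in keys P, ex ks = s, coef P ks != 0 & wt s = vv P].
Proof.
move=> hs; have := hs; rewrite supp_ell_mem => /andP [hps /eqP hws].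
have := hps; rewrite -supp_mem /supp mem_undup => /mapP [m].
rewrite (@mem_filter _ _ m) => /andP [_ hm] hsm.
exists m.1; split => //.
- by rewrite /keys mem_undup map_f.
- by rewrite -psi_ex -[ex m.1]/(expo l m) -hsm.
Qed.

Lemma coef_le (P : Wl K) e : supp l P != [::] -> coef P e != 0 -> wt (ex e) <= vv P.
Proof.
move=> hP he; have [h1 _] := vval_spec _ hP; apply: h1.
by rewrite supp_mem psi_ex.
Qed.

Variables P Q R : Wl K.
Hypothesis hP : supp l P != [::].
Hypothesis hQ : supp l Q != [::].
Hypothesis hbr : forall a b, brk l rho sigma P Q a b = ell l rho sigma R a b.

Definition C := commW l P Q.
Definition v := vv P + vv Q - c.

Lemma formula p : v <= wt p -> psi l C p.1 p.2 =
  \sum_(e1 <- keys P) \sum_(e2 <- keys Q)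
     coef P e1 * coef Q e2 * ((pm1 (ex e1) (ex e2) == p)%:R * det e1 e2).
Proof.
move=> hp; rewrite psi_comm; apply: eq_bigr => e1 _; apply: eq_bigr => e2 _.
case: (eqVneq (coef P e1) 0) => [->|h1]; first by rewrite !mul0r.
case: (eqVneq (coef Q e2) 0) => [->|h2]; first by rewrite mulr0 !mul0r.
rewrite D_eq //; apply: le_trans hp; rewrite /v wt_padd lerD2r lerD //; exact: coef_le.
Qed.

Lemma L4 e1 e2 : coef P e1 != 0 -> coef Q e2 != 0 ->
  v <= wt (pm1 (ex e1) (ex e2)) ->
  [/\ wt (pm1 (ex e1) (ex e2)) = v,
      ex e1 = pick_best bt (sell P) \/ f (ex e1) < f (pick_best bt (sell P)) &
      ex e2 = pick_best bt (sell Q) \/ f (ex e2) < f (pick_best bt (sell Q))].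
Proof.
move=> h1 h2 hv.
have b1 := coef_le _ _ hP h1; have b2 := coef_le _ _ hQ h2.
move: hv; rewrite wt_pm1 /v => hv.
have e1w : wt (ex e1) = vv P by lra.
have e2w : wt (ex e2) = vv Q by lra.
split; first by rewrite e1w e2w.
- have [_ H] := best_spec _ hP; apply: H.
  by rewrite supp_ell_mem psi_ex h1 e1w eqxx.
- have [_ H] := best_spec _ hQ; apply: H.
  by rewrite supp_ell_mem psi_ex h2 e2w eqxx.
Qed.

Hypothesis hal : ~~ aligned (pick_best bt (sell P)) (pick_best bt (sell Q)).

Lemma main_res : pm1 (pick_best bt (sell P)) (pick_best bt (sell Q)) = pick_best bt (sell R).
Proof.
have [hs _] := best_spec _ hP; have [ht _] := best_spec _ hQ.
have [ks [hks eks cks wks]] := key_of _ _ hs.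
have [kt [hkt ekt ckt wkt]] := key_of _ _ ht.
set u := pm1 _ _.
have wu : wt u = v by rewrite /u wt_pm1 wks wkt.
have L5 : forall e1 e2, coef P e1 != 0 -> coef Q e2 != 0 ->
    pm1 (ex e1) (ex e2) = u -> e1 = ks /\ e2 = kt.
  move=> e1 e2 h1 h2 he.
  have hv : v <= wt (pm1 (ex e1) (ex e2)) by rewrite he wu.
  have [_ o1 o2] := L4 _ _ h1 h2 hv.
  have hf : f (ex e1) + f (ex e2) = f (pick_best bt (sell P)) + f (pick_best bt (sell Q)).
    by rewrite -!hfp he.
  have [E1 E2] : ex e1 = pick_best bt (sell P) /\ ex e2 = pick_best bt (sell Q).
    case: o1 => o1; case: o2 => o2.
    - by [].
    - by exfalso; rewrite o1 in hf; move/addrI: hf => hf; rewrite hf ltxx in o2.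
    - by exfalso; rewrite o2 in hf; move/addIr: hf => hf; rewrite hf ltxx in o1.
    - by exfalso; move: (ltrD o1 o2); rewrite hf ltxx.
  by split; apply: ex_inj; rewrite ?E1 ?E2 ?eks ?ekt.
have zeroA : forall p, v < wt p -> psi l C p.1 p.2 = 0.
  move=> p hp; rewrite formula ?ltW //.
  rewrite big1_seq // => e1 _; rewrite big1_seq // => e2 _.
  case: (eqVneq (coef P e1) 0) => [->|h1]; first by rewrite !mul0r.
  case: (eqVneq (coef Q e2) 0) => [->|h2]; first by rewrite mulr0 !mul0r.
  case: eqP => [he|_]; last by rewrite mul0r mulr0.
  have hv : v <= wt (pm1 (ex e1) (ex e2)) by rewrite he ltW.
  have [hw _ _] := L4 _ _ h1 h2 hv.
  by move: hp; rewrite -he hw ltxx.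
pose tm e1 e2 := coef P e1 * coef Q e2 * ((pm1 (ex e1) (ex e2) == u)%:R * det e1 e2).
have Ltm : forall e1 e2, tm e1 e2 != 0 -> e1 = ks /\ e2 = kt.
  move=> e1 e2; rewrite /tm.
  case: (eqVneq (coef P e1) 0) => [->|h1]; first by rewrite !mul0r eqxx.
  case: (eqVneq (coef Q e2) 0) => [->|h2]; first by rewrite mulr0 !mul0r eqxx.
  case: (eqVneq (pm1 (ex e1) (ex e2)) u) => [he|hne]; last by rewrite -[false%:R]/(0:K) mul0r mulr0 eqxx.
  by move=> _; exact: L5.
have psiu : psi l C u.1 u.2 = coef P ks * coef Q kt * det ks kt.
  rewrite formula ?wu // (bigD1_seq ks) ?undup_uniq //= (bigD1_seq kt) ?undup_uniq //=.
  rewrite [X in _ + X + _]big1_seq ?addr0; last first.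
    move=> e2 /andP [hne _]; apply/eqP; apply: contraR hne => /(Ltm ks e2) [_ ->].
    by rewrite eqxx.
  rewrite [X in _ + X]big1_seq ?addr0; last first.
    move=> e1 /andP [hne _]; apply: big1_seq => e2 _; apply/eqP.
    by apply: contraR hne => /(Ltm e1 e2) [-> _]; rewrite eqxx.
  by rewrite eks ekt -/u eqxx mul1r.
have psiu_ne : psi l C u.1 u.2 != 0.
  by rewrite psiu !mulf_neq0 // det_ne0 // eks ekt.
have hu : u \in supp l C by rewrite supp_mem.
have vC : vv C = v.
  apply: (vval_eq _ _ _ hu wu) => q hq; rewrite leNgt; apply/negP => hlt.
  by move: hq; rewrite supp_mem zeroA ?eqxx.
have hell : forall a b, ell l rho sigma R a b = ell l rho sigma C a b.
  move=> a b; rewrite -hbr /brk /= -/C vC.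
  have -> : (supp l C == [::]) = false by case: (supp l C) hu.
  by rewrite /v /c ltxx.
have memR : forall p, (p \in sell R) = (psi l C p.1 p.2 != 0) && (wt p == v).
  move=> p.
  have -> : (p \in sell R) = (ell l rho sigma R p.1 p.2 != 0).
    rewrite supp_ell_mem /ell -surjective_pairing.
    by case: (wt p == vv R); rewrite ?andbT ?andbF ?eqxx.
  rewrite hell /ell -surjective_pairing vC.
  by case: (wt p == v); rewrite ?andbT ?andbF ?eqxx.
have uR : u \in sell R by rewrite memR psiu_ne wu eqxx.
have neR : sell R != [::] by case: (sell R) uR.
have [hr hbest] := @pick_gen f g hfg _ neR.
set r := pick_best bt (sell R) in hr hbest *.
have : r = u \/ f r < f u.
  move: hr; rewrite memR => /andP [hpr /eqP hwr].
  move: hpr; rewrite formula ?hwr // => /sum_ne0 [e1 _ /sum_ne0 [e2 _ hne]].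
  have h1 : coef P e1 != 0 by apply: contraNneq hne => ->; rewrite !mul0r.
  have h2 : coef Q e2 != 0 by apply: contraNneq hne => ->; rewrite mulr0 !mul0r.
  have he : pm1 (ex e1) (ex e2) = r.
    by apply/eqP; apply: contraNT hne => /negbTE ->; rewrite mul0r mulr0.
  have hv : v <= wt (pm1 (ex e1) (ex e2)) by rewrite he hwr.
  have [_ o1 o2] := L4 _ _ h1 h2 hv.
  have hf : f r = f (ex e1) + f (ex e2) by rewrite -he hfp.
  case: o1 => o1; case: o2 => o2.
  - by left; rewrite -he o1 o2.
  - by right; rewrite hf /u hfp o1 ltrD2l.
  - by right; rewrite hf /u hfp o2 ltrD2r.
  - by right; rewrite hf /u hfp ltrD.
case => [//|hlt].
case: (hbest u uR) => [//|/bg_f hle].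
by move: (lt_le_trans hlt hle); rewrite ltxx.
Qed.
End Main.
End Work.

Lemma wline (rho sigma : int) (hc : 0 < rho + sigma) (x y : rat * rat) :
  x.1 - x.2 = y.1 - y.2 -> wt rho sigma x = wt rho sigma y -> x = y.
Proof.
move=> h1 h2.
have hd : (x.1 - y.1) * (rho + sigma)%:~R = 0.
  have -> : (x.1 - y.1) * (rho + sigma)%:~R =
     (wt rho sigma x - wt rho sigma y) + sigma%:~R * ((x.1 - x.2) - (y.1 - y.2)).
    by rewrite /wt intrD; ring.
  by rewrite h1 h2 !subrr mulr0 addr0.
move/eqP: hd; rewrite mulf_eq0 intr_eq0 (gt_eqF hc) orbF subr_eq0 => /eqP ha.
move: h1; rewrite ha => /addrI /oppr_inj hb.
by clear h2; case: x y ha hb => a b [a' b'] /= -> ->.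
Qed.

Theorem proposition2p4 (K : fieldType) (hK : [pchar K] =i pred0)
  (l : nat) (hl : (0 < l)%N) (P Q R : Wl K) (rho sigma : int)
  (hV : inV rho sigma) (hs : sigma <= 0)
  (hP : supp l P != [::]) (hQ : supp l Q != [::]) (hR : supp l R != [::])
  (hbr : forall a b : rat, brk l rho sigma P Q a b = ell l rho sigma R a b) :
  (~~ aligned (st l rho sigma P) (st l rho sigma Q) ->
     ((st l rho sigma P).1 + (st l rho sigma Q).1 - 1,
      (st l rho sigma P).2 + (st l rho sigma Q).2 - 1) = st l rho sigma R) /\
  (~~ aligned (en l rho sigma P) (en l rho sigma Q) ->
     ((en l rho sigma P).1 + (en l rho sigma Q).1 - 1,
      (en l rho sigma P).2 + (en l rho sigma Q).2 - 1) = en l rho sigma R).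
Proof.
have hc : 0 < rho + sigma by case/andP: hV.
split => hal.
- have hfg : forall x y : rat * rat, x.1 - x.2 = y.1 - y.2 -> x.1 = y.1 -> x = y.
    by move=> [a b] [a' b'] /= h ha; congr pair => //; lra.
  have hfw := @wline rho sigma hc.
  have hfp : forall x y, (pm1 x y).1 - (pm1 x y).2 = (x.1 - x.2) + (y.1 - y.2).
    by move=> x y; rewrite /pm1 /=; ring.
  exact: (@main_res K hK l hl rho sigma hc (fun x => x.1 - x.2) (fun x => x.1) hfg hfw hfp P Q R hP hQ hbr hal).
- have hfg : forall x y : rat * rat, x.2 - x.1 = y.2 - y.1 -> x.2 = y.2 -> x = y.
    by move=> [a b] [a' b'] /= h hb; congr pair => //; lra.
  have hfw : forall x y : rat * rat, x.2 - x.1 = y.2 - y.1 ->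
      wt rho sigma x = wt rho sigma y -> x = y.
    move=> x y h; apply: (@wline rho sigma hc).
    by rewrite -opprB h opprB.
  have hfp : forall x y, (pm1 x y).2 - (pm1 x y).1 = (x.2 - x.1) + (y.2 - y.1).
    by move=> x y; rewrite /pm1 /=; ring.
  exact: (@main_res K hK l hl rho sigma hc (fun x => x.2 - x.1) (fun x => x.2) hfg hfw hfp P Q R hP hQ hbr hal).
Qed.
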